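(* Let $X_1,\dots,X_n$ be (possibly dependent) identically distributed component lifetimes with common distribution that of $X$, and let $\tau_1(\mathbf X)$ and $\tau_2(\mathbf X)$ be lifetimes of two coherent systems built on such components, with domination functions $h_1$ and $h_2$, i.e. $\bar F_{\tau_i(\mathbf X)}(x)=h_i(\bar F_X(x))$, $i=1,2$. Let $R_i(p)=(1-p)h_i'(p)/(1-h_i(p))$, $p\in(0,1)$. Then $\tau_1(\mathbf X)\underset{b}{\prec}\tau_2(\mathbf X)$ (resp. $\tau_1(\mathbf X)\underset{b}{\succ}\tau_2(\mathbf X)$) if and only if $R_1(p)/R_2(p)$ is increasing (resp. decreasing) in $p\in(0,1)$.
   Context: All random variables are non-negative and absolutely continuous with support $[0,\infty)$. For a random variable $W$: density $f_W$, cdf $F_W$, survival $\bar F_W=1-F_W$, reversed hazard rate $\tilde r_W=f_W/F_W$. $U\underset{b}{\prec}V$ means $\tilde r_U(x)/\tilde r_V(x)$ is decreasing in $x\ge0$; $U\underset{b}{\succ}V$ means $V\underset{b}{\prec}U$. The domination function $h:[0,1]\to[0,1]$ of a coherent system with identically distributed (possibly dependent) components is the function, depending on structure and survival copula, with system reliability $h(\bar F_X(x))$; it is increasing, continuous, $h(0)=0$, $h(1)=1$, assumed differentiable. ''Increasing'' means non-decreasing, ''decreasing'' means non-increasing. *)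

(* Defs.v *)
From HB Require Import structures.
From mathcomp Require Import all_boot all_order all_algebra.
From mathcomp Require Import all_classical all_reals all_analysis.
Set Implicit Arguments. Unset Strict Implicit. Unset Printing Implicit Defensive.
Import Order.TTheory GRing.Theory Num.Theory.
Import numFieldNormedType.Exports.
Local Open Scope classical_set_scope.
Local Open Scope ring_scope.

Section Defs.
Variable R : realType.

Definition lifetime_cdf (F f : R -> R) : Prop :=
  [/\ (forall x : R, x <= 0 -> F x = 0),
      {for 0, continuous F},
      F x @[x --> +oo] --> (1 : R) &
      (forall x : R, 0 < x -> is_derive x 1 F (f x) /\ 0 < f x)].

Definition rev_hazard (F f : R -> R) (x : R) : R := f x / F x.

(* U <_b V : r~_U(x) / r~_V(x) is decreasing (non-increasing) in x
   (on x > 0, where the reversed hazard rates are defined). *)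
Definition b_prec (FU fU FV fV : R -> R) : Prop :=
  forall x y : R, 0 < x -> x <= y ->
    rev_hazard FU fU y / rev_hazard FV fV y
      <= rev_hazard FU fU x / rev_hazard FV fV x.

Definition domination_fun (h : R -> R) : Prop :=
  [/\ (forall p q : R, 0 <= p -> p <= q -> q <= 1 -> h p <= h q),
      {within `[0, 1], continuous h},
      h 0 = 0, h 1 = 1 &
      (forall p : R, 0 < p < 1 -> derivable h p 1)].

Definition Rfun (h : R -> R) (p : R) : R := (1 - p) * derive1 h p / (1 - h p).

Definition incr_on01 (g : R -> R) : Prop :=
  forall p q : R, 0 < p -> p <= q -> q < 1 -> g p <= g q.
Definition decr_on01 (g : R -> R) : Prop :=
  forall p q : R, 0 < p -> p <= q -> q < 1 -> g q <= g p.

End Defs.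

(* Main.v *)
Require Import Defs.
From HB Require Import structures.
From mathcomp Require Import all_boot all_order all_algebra.
From mathcomp Require Import all_classical all_reals all_analysis.
From mathcomp Require Import ring lra.
Import Order.TTheory GRing.Theory Num.Theory.
Import numFieldNormedType.Exports.
Local Open Scope ring_scope.

Section Aux.
Variable R : realType.
Implicit Types (F f : R -> R).

Lemma lc_cont F f : lifetime_cdf F f -> forall x, 0 <= x -> {for x, continuous F}.
Proof.
case=> _ c0 _ hd x; rewrite le_eqVlt => /orP[/eqP <-|x0] //.
apply: differentiable_continuous; apply/derivable1_diffP.
by have [+ _] := hd x x0 => /(@ex_derive _ _ _ _ _ _ _).
Qed.

Lemma lc_within F f a b : lifetime_cdf F f -> 0 <= a -> {within `[a, b], continuous F}%classic.
Proof.
move=> hF a0; apply: continuous_in_subspaceT => x.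
rewrite inE /= in_itv /= => /andP[ax _].
exact: (@lc_cont F f hF x (le_trans a0 ax)).
Qed.

Lemma lc_incr F f a b : lifetime_cdf F f -> 0 <= a -> a < b -> F a < F b.
Proof.
move=> hF a0 ab.
have hF' := hF; case: hF' => _ _ _ hd.
have hd' : forall x, x \in `]a, b[ -> is_derive x 1 F (f x).
  move=> x; rewrite in_itv /= => /andP[ax _].
  exact: (hd x (le_lt_trans a0 ax)).1.
have [c] := MVT ab hd' (@lc_within F f a b hF a0).
rewrite in_itv /= => /andP[ac _] e.
rewrite -subr_gt0 e; apply: mulr_gt0; last by rewrite subr_gt0.
exact: (hd c (le_lt_trans a0 ac)).2.
Qed.

Lemma lc_pos F f x : lifetime_cdf F f -> 0 < x -> 0 < F x.
Proof.
move=> hF x0; have := @lc_incr F f 0 x hF (lexx _) x0.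
by case: hF => -> // _ _ _; rewrite lexx.
Qed.

Lemma lc_lt1 F f x : lifetime_cdf F f -> 0 < x -> F x < 1.
Proof.
move=> hF x0.
have x1 : x < x + 1 by rewrite ltrDl.
have h1 := @lc_incr F f x (x + 1) hF (ltW x0) x1.
rewrite ltNge; apply/negP => hx.
have hF' := hF; case: hF' => _ _ hl _.
have := cvgr_lt _ hl _ (le_lt_trans hx h1 : 1 < F (x + 1)).
case=> M [Mr HM].
set z := Num.max M (x + 1) + 1.
have Mz : M < z by rewrite /z ltr_pwDr // le_max lexx.
have xz : x + 1 < z by rewrite /z ltr_pwDr // le_max lexx orbT.
have := HM z Mz; rewrite /=.
have := @lc_incr F f (x + 1) z hF (ltW (lt_trans x0 x1)) xz.
move=> a b; have := lt_trans a b; by rewrite ltxx.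
Qed.

Lemma lc_surj F f v : lifetime_cdf F f -> 0 < v < 1 -> exists2 x, 0 < x & F x = v.
Proof.
move=> hF /andP[v0 v1].
have hF' := hF; case: hF' => F0 _ hl _.
have := cvgr_gt _ hl _ v1.
case=> M [Mr HM].
set b := Num.max M 0 + 1.
have Mb : M < b by rewrite /b ltr_pwDr // le_max lexx.
have b0 : 0 < b by rewrite /b ltr_pwDr // le_max lexx orbT.
have Fb := HM b Mb; rewrite /= in Fb.
have hv : Num.min (F 0) (F b) <= v <= Num.max (F 0) (F b).
  rewrite F0 // ge_min le_max; apply/andP; split; first by rewrite ltW.
  by rewrite (ltW Fb) orbT.
have [c] := @IVT R F 0 b v (ltW b0) (@lc_within F f 0 b hF (lexx _)) hv.
rewrite in_itv /= => /andP[c0 _] Fc; exists c => //.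
rewrite lt_neqAle c0 andbT; apply/negP => /eqP c0'; move: Fc.
by rewrite -c0' F0 // => e; move: v0; rewrite -e ltxx.
Qed.

Lemma lc_deriv F f G g h x : lifetime_cdf F f -> lifetime_cdf G g ->
  domination_fun h -> (forall x, 1 - G x = h (1 - F x)) -> 0 < x ->
  g x = derive1 h (1 - F x) * f x.
Proof.
move=> hF hG hh dom x0.
have eG : G = (fun y => 1 - h (1 - F y)).
  by apply: funext => y; rewrite -dom opprB addrC subrK.
have p01 : 0 < 1 - F x < 1.
  by rewrite subr_gt0 (@lc_lt1 F f x hF x0) /= ltrBlDr ltrDl (@lc_pos F f x hF x0).
case: hh => _ _ _ _ hd.
have dh := derivableP (hd _ p01).
have [dF _] := (let: And4 _ _ _ d := hF in d) x x0.
have [dG _] := (let: And4 _ _ _ d := hG in d) x x0.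
have d1 := is_deriveB (is_derive_cst (1 : R) x 1) dF.
have d2 := @is_derive1_comp R h (cst 1 - F) x _ _ dh d1.
have d3 := is_deriveB (is_derive_cst (1 : R) x 1) d2.
have eG' : G = (cst 1 - h \o (cst 1 - F)) by rewrite eG; apply: funext.
rewrite -(@derive_val _ _ _ _ _ _ _ dG) eG' (@derive_val _ _ _ _ _ _ _ d3) derive1E.
by rewrite !sub0r mulrN opprK.
Qed.

Lemma transfer F f (Phi r : R -> R) : lifetime_cdf F f ->
  (forall x, 0 < x -> r x = Phi (1 - F x)) ->
  ((forall x y, 0 < x -> x <= y -> r y <= r x) <-> incr_on01 Phi).
Proof.
move=> hF hr; split.
- move=> Hb p q p0 pq q1.
  have hp : 0 < 1 - p < 1.
    by rewrite subr_gt0 (le_lt_trans pq q1) /= ltrBlDr ltrDl.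
  have hq : 0 < 1 - q < 1.
    by rewrite subr_gt0 q1 /= ltrBlDr ltrDl (lt_le_trans p0 pq).
  have [xp xp0 Fp] := @lc_surj F f (1 - p) hF hp.
  have [xq xq0 Fq] := @lc_surj F f (1 - q) hF hq.
  case: (leP xq xp) => hx.
    have e : forall t : R, 1 - (1 - t) = t.
      by move=> t; rewrite opprB addrC subrK.
    by have := Hb xq xp xq0 hx; rewrite !hr // Fp Fq !e.
  have := @lc_incr F f xp xq hF (ltW xp0) hx; rewrite Fp Fq ltrD2l ltrN2 => qp.
  by have := le_lt_trans pq qp; rewrite ltxx.
- move=> Hi x y x0 xy.
  have y0 := lt_le_trans x0 xy.
  rewrite !hr //; apply: Hi.
  + by rewrite subr_gt0 (@lc_lt1 F f y hF y0).
  + rewrite lerD2l lerN2; move: xy; rewrite le_eqVlt => /orP[/eqP -> //|xy].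
    exact: ltW (@lc_incr F f x y hF (ltW x0) xy).
  + by rewrite ltrBlDr ltrDl (@lc_pos F f x hF x0).
Qed.

Lemma ratio_eq F f G1 g1 G2 g2 h1 h2 x : lifetime_cdf F f ->
  lifetime_cdf G1 g1 -> lifetime_cdf G2 g2 ->
  domination_fun h1 -> domination_fun h2 ->
  (forall x, 1 - G1 x = h1 (1 - F x)) -> (forall x, 1 - G2 x = h2 (1 - F x)) ->
  0 < x ->
  rev_hazard G1 g1 x / rev_hazard G2 g2 x = Rfun h1 (1 - F x) / Rfun h2 (1 - F x)
  /\ 0 < rev_hazard G1 g1 x / rev_hazard G2 g2 x.
Proof.
move=> hF hG1 hG2 hh1 hh2 dom1 dom2 x0.
have e1 := @lc_deriv F f G1 g1 h1 x hF hG1 hh1 dom1 x0.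
have e2 := @lc_deriv F f G2 g2 h2 x hF hG2 hh2 dom2 x0.
have g1p : 0 < g1 x by case: hG1 => _ _ _ /(_ x x0) [].
have g2p : 0 < g2 x by case: hG2 => _ _ _ /(_ x x0) [].
have fp : 0 < f x by case: hF => _ _ _ /(_ x x0) [].
have G1p := @lc_pos G1 g1 x hG1 x0.
have G2p := @lc_pos G2 g2 x hG2 x0.
have Fp := @lc_pos F f x hF x0.
split; last by rewrite /rev_hazard !divr_gt0.
have k1 : 1 - h1 (1 - F x) = G1 x by rewrite -dom1 opprB addrC subrK.
have k2 : 1 - h2 (1 - F x) = G2 x by rewrite -dom2 opprB addrC subrK.
have k3 : 1 - (1 - F x) = F x by rewrite opprB addrC subrK.
rewrite /rev_hazard /Rfun k1 k2 k3 e1 e2.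
have d2 : derive1 h2 (1 - F x) != 0.
  by apply/negP => /eqP d; move: g2p; rewrite e2 d mul0r ltxx.
have d1 : derive1 h1 (1 - F x) != 0.
  by apply/negP => /eqP d; move: g1p; rewrite e1 d mul0r ltxx.
by field; rewrite d2 !gt_eqF.
Qed.

End Aux.

Theorem proposition3p2 (R : realType)
    (F f G1 g1 G2 g2 h1 h2 : R -> R)
    (hX : lifetime_cdf F f)
    (hT1 : lifetime_cdf G1 g1) (hT2 : lifetime_cdf G2 g2)
    (hh1 : domination_fun h1) (hh2 : domination_fun h2)
    (dom1 : forall x : R, 1 - G1 x = h1 (1 - F x))
    (dom2 : forall x : R, 1 - G2 x = h2 (1 - F x)) :
  (b_prec G1 g1 G2 g2 <-> incr_on01 (fun p => Rfun h1 p / Rfun h2 p)) /\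
  (b_prec G2 g2 G1 g1 <-> decr_on01 (fun p => Rfun h1 p / Rfun h2 p)).
Proof.
have E := fun x => @ratio_eq R F f G1 g1 G2 g2 h1 h2 x hX hT1 hT2 hh1 hh2 dom1 dom2.
split.
  apply: (@transfer R F f _ _ hX).
  by move=> x x0; have [-> _] := E x x0.
have Qpos : forall p : R, 0 < p < 1 -> 0 < Rfun h1 p / Rfun h2 p.
  move=> p hp.
  have hp' : 0 < 1 - p < 1.
    by case/andP: hp => p0 p1; rewrite subr_gt0 p1 /= ltrBlDr ltrDl.
  have [x x0 Fx] := @lc_surj R F f (1 - p) hX hp'.
  have [e pos] := E x x0.
  have k : 1 - (1 - p) = p by rewrite opprB addrC subrK.
  by move: pos; rewrite e Fx k.
apply: (iff_trans (@transfer R F f (fun p => (Rfun h1 p / Rfun h2 p)^-1)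
   (fun x => rev_hazard G2 g2 x / rev_hazard G1 g1 x) hX _)).
  move=> x x0; have [e _] := E x x0.
  by rewrite -e [RHS]invf_div.
split=> H p q p0 pq q1.
  have hp : 0 < p < 1 by rewrite p0 (le_lt_trans pq q1).
  have hq : 0 < q < 1 by rewrite q1 (lt_le_trans p0 pq).
  by have := H p q p0 pq q1; rewrite lef_pV2 ?posrE ?Qpos.
have hp : 0 < p < 1 by rewrite p0 (le_lt_trans pq q1).
have hq : 0 < q < 1 by rewrite q1 (lt_le_trans p0 pq).
by rewrite lef_pV2 ?posrE ?Qpos //; exact: H.
Qed.
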